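(* Let $(X,T)$ be a minimal flow on a compact Hausdorff space $X$ (no assumption on $T$ and no invariant measure assumed). Then $P(x)\subset\overline{V(x)}$ for every $x\in X$. If moreover $X$ is metrizable, then $P\subset V$.
   Context: $X$ compact Hausdorff, $T$ a topological group acting continuously on $X$; minimal means every orbit is dense. Proximal relation: $(x,y)\in P$ iff there are a net $\{t_i\}\subset T$ and $z\in X$ with $t_ix\to z$ and $t_iy\to z$. Veech relation: $(x,y)\in V$ iff there are $z\in X$ and a net $\{t_i\}\subset T$ with $t_ix\to z$ and $t_i^{-1}z\to y$. For a relation $R$, $R(x)=\{y:(x,y)\in R\}$. *)

(* Defs.v *)
From Stdlib Require Import Reals List.
Open Scope R_scope.

Record topology (X : Type) : Type := Topology {
  open : (X -> Prop) -> Prop;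
  open_full : open (fun _ => True);
  open_inter : forall U V, open U -> open V -> open (fun x => U x /\ V x);
  open_union : forall (I : Type) (F : I -> X -> Prop),
      (forall i, open (F i)) -> open (fun x => exists i, F i x)
}.
Arguments open {X} t U.

Definition closure {X : Type} (tX : topology X) (A : X -> Prop) (y : X) : Prop :=
  forall U, open tX U -> U y -> exists a, U a /\ A a.

Definition hausdorff {X : Type} (tX : topology X) : Prop :=
  forall x y, x <> y -> exists U V, open tX U /\ open tX V /\ U x /\ V y /\
    (forall z, U z -> V z -> False).

Definition compact {X : Type} (tX : topology X) : Prop :=
  forall (I : Type) (F : I -> X -> Prop),
    (forall i, open tX (F i)) -> (forall x, exists i, F i x) ->
    exists l : list I, forall x, exists i, In i l /\ F i x.

Definition prod_open {A B : Type} (tA : topology A) (tB : topology B)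
  (W : A * B -> Prop) : Prop :=
  forall p, W p -> exists U V, open tA U /\ open tB V /\ U (fst p) /\ V (snd p) /\
    (forall a b, U a -> V b -> W (a, b)).

Definition continuous {A B : Type} (tA : topology A) (tB : topology B) (f : A -> B) : Prop :=
  forall V, open tB V -> open tA (fun a => V (f a)).

Definition continuous2 {A B C : Type} (tA : topology A) (tB : topology B)
  (tC : topology C) (f : A -> B -> C) : Prop :=
  forall W, open tC W -> prod_open tA tB (fun p => W (f (fst p) (snd p))).

Definition is_topological_group {G : Type} (tG : topology G)
  (mul : G -> G -> G) (inv : G -> G) (e : G) : Prop :=
  (forall a b c, mul a (mul b c) = mul (mul a b) c) /\
  (forall a, mul e a = a) /\ (forall a, mul a e = a) /\
  (forall a, mul (inv a) a = e) /\ (forall a, mul a (inv a) = e) /\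
  continuous2 tG tG tG mul /\ continuous tG tG inv.

Definition is_continuous_action {G X : Type} (tG : topology G) (tX : topology X)
  (mul : G -> G -> G) (e : G) (act : G -> X -> X) : Prop :=
  (forall x, act e x = x) /\
  (forall s t x, act (mul s t) x = act s (act t x)) /\
  continuous2 tG tX tX act.

Definition minimal {G X : Type} (tX : topology X) (act : G -> X -> X) : Prop :=
  forall x y, closure tX (fun z => exists t, z = act t x) y.

Record directed : Type := Directed {
  dset :> Type;
  dle : dset -> dset -> Prop;
  dle_refl : forall i, dle i i;
  dle_trans : forall i j k, dle i j -> dle j k -> dle i k;
  dle_upper : forall i j, exists k, dle i k /\ dle j k;
  dinhab : dset
}.

Definition net_converges {X : Type} (tX : topology X) {D : directed}
  (s : D -> X) (z : X) : Prop :=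
  forall U, open tX U -> U z -> exists i0 : D, forall i, dle D i0 i -> U (s i).

Definition proximal {G X : Type} (tX : topology X) (act : G -> X -> X) (x y : X) : Prop :=
  exists (D : directed) (t : D -> G) (z : X),
    net_converges tX (fun i => act (t i) x) z /\
    net_converges tX (fun i => act (t i) y) z.

Definition veech {G X : Type} (tX : topology X) (inv : G -> G) (act : G -> X -> X)
  (x y : X) : Prop :=
  exists (D : directed) (t : D -> G) (z : X),
    net_converges tX (fun i => act (t i) x) z /\
    net_converges tX (fun i => act (inv (t i)) z) y.

Definition metrizable {X : Type} (tX : topology X) : Prop :=
  exists d : X -> X -> R,
    (forall x y, 0 <= d x y) /\ (forall x y, d x y = 0 <-> x = y) /\
    (forall x y, d x y = d y x) /\ (forall x y z, d x z <= d x y + d y z) /\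
    (forall U, open tX U <->
       (forall x, U x -> exists eps, 0 < eps /\ forall y, d x y < eps -> U y)).

(* Main.v *)
Require Import Defs.
From Stdlib Require Import Reals List Lra Lia Classical ClassicalEpsilon FunctionalExtensionality PropExtensionality.
Import Defs.
Open Scope R_scope.

Lemma open_ext {X} (tX : topology X) (U V : X -> Prop) :
  (forall x, U x <-> V x) -> open tX U -> open tX V.
Proof.
  intros H HU. assert (U = V) as E.
  { extensionality x. apply propositional_extensionality; auto. }
  subst; auto.
Qed.

Lemma open_local {X} (tX : topology X) (S : X -> Prop) :
  (forall x, S x -> exists V, open tX V /\ V x /\ forall y, V y -> S y) -> open tX S.
Proof.
  intros H.
  apply (open_ext tX (fun x => exists i : {V : X -> Prop | open tX V /\ forall y, V y -> S y}, proj1_sig i x)).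
  - intros x; split.
    + intros [i Hi]. destruct i as [V [HV HVS]]. simpl in Hi. auto.
    + intros Hx. destruct (H x Hx) as [V [HV [HVx HVS]]].
      exists (exist _ V (conj HV HVS)). exact HVx.
  - apply open_union. intros i. exact (proj1 (proj2_sig i)).
Qed.

Lemma act_open {G X} (tG : topology G) (tX : topology X) (act : G -> X -> X) :
  continuous2 tG tX tX act -> forall s Q, open tX Q -> open tX (fun w => Q (act s w)).
Proof.
  intros Hc s Q HQ. apply open_local. intros w Hw.
  destruct (Hc Q HQ (s, w) Hw) as [U [V [HU [HV [HUs [HVw HUV]]]]]].
  exists V. split; [exact HV|split; [exact HVw|]]. intros y Hy. apply (HUV s y HUs Hy).
Qed.

Lemma open_list_inter {X} (tX : topology X) {I} (l : list I) (F : I -> X -> Prop) :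
  (forall i, In i l -> open tX (F i)) -> open tX (fun z => forall i, In i l -> F i z).
Proof.
  induction l as [|a l IH]; intros H.
  - apply (open_ext tX (fun _ => True)).
    + intros z; split; [intros _ i Hi; destruct Hi | auto].
    + apply open_full.
  - apply (open_ext tX (fun z => F a z /\ forall i, In i l -> F i z)).
    + intros z; split.
      * intros [H1 H2] i [Hi|Hi]; [subst; auto | auto].
      * intros H1; split; [apply H1; left; auto | intros i Hi; apply H1; right; auto].
    + apply open_inter; [apply H; left; auto | apply IH; intros; apply H; right; auto].
Qed.

Lemma closure_incl {X} (tX : topology X) (S : X -> Prop) w : S w -> closure tX S w.
Proof. intros Sw U _ Uw. exists w; auto. Qed.

Lemma regular {X} (tX : topology X) : compact tX -> hausdorff tX ->
  forall A p, open tX A -> A p ->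
  exists B, open tX B /\ B p /\ forall w, closure tX B w -> A w.
Proof.
  intros Hc Hh A p HA Ap.
  assert (Hsep : forall q : {q | ~ A q}, exists UV : (X->Prop)*(X->Prop),
     open tX (fst UV) /\ open tX (snd UV) /\ fst UV p /\ snd UV (proj1_sig q) /\
     forall z, fst UV z -> snd UV z -> False).
  { intros [q Hq]. simpl. assert (p <> q) as Hpq by (intro; subst; auto).
    destruct (Hh p q Hpq) as [U [V HUV]]. exists (U,V). simpl. tauto. }
  pose (f := fun q => proj1_sig (constructive_indefinite_description _ (Hsep q))).
  assert (Hf : forall q, open tX (fst (f q)) /\ open tX (snd (f q)) /\ fst (f q) p /\
     snd (f q) (proj1_sig q) /\ forall z, fst (f q) z -> snd (f q) z -> False).
  { intros q. exact (proj2_sig (constructive_indefinite_description _ (Hsep q))). }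
  pose (F := fun o : option {q | ~ A q} => match o with None => A | Some q => snd (f q) end).
  destruct (Hc _ F) as [l Hl].
  - intros [q|]; simpl; [apply Hf | exact HA].
  - intros x. destruct (classic (A x)) as [Ax|nAx].
    + exists None; exact Ax.
    + exists (Some (exist _ x nAx)). simpl. apply Hf.
  - pose (F' := fun o : option {q | ~ A q} => match o with None => fun _ => True | Some q => fst (f q) end).
    exists (fun z => forall o, In o l -> F' o z).
    split; [|split].
    + apply open_list_inter. intros [q|] _; simpl; [apply Hf | apply open_full].
    + intros o _. destruct o as [q|]; simpl; [apply Hf | exact I].
    + intros w Hw. destruct (Hl w) as [o [Ho Fo]]. destruct o as [q|]; [|exact Fo].
      exfalso. simpl in Fo.
      destruct (Hw (snd (f q))) as [a [Ha Ba]]; [apply Hf | exact Fo |].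
      apply (proj2 (proj2 (proj2 (proj2 (Hf q)))) a); [| exact Ha].
      apply (Ba (Some q) Ho).
Qed.

Lemma upper_list (D : directed) {A} (g : A -> D) (l : list A) :
  exists k, forall a, In a l -> dle D (g a) k.
Proof.
  induction l as [|a l [k Hk]].
  - exists (dinhab D). intros a [].
  - destruct (dle_upper D (g a) k) as [m [H1 H2]]. exists m.
    intros b [Hb|Hb]; [subst; auto | eapply dle_trans; eauto].
Qed.

Lemma cluster {X} (tX : topology X) (Hc : compact tX) (D : directed) (s : D -> X) :
  exists z, forall U, open tX U -> U z -> forall i0, exists i, dle D i0 i /\ U (s i).
Proof.
  apply NNPP; intro Hn.
  assert (H : forall w, exists p : (X->Prop) * D, open tX (fst p) /\ fst p w /\
             forall i, dle D (snd p) i -> ~ fst p (s i)).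
  { intros w. apply NNPP; intro H2. apply Hn. exists w. intros U HU Uw i0.
    apply NNPP; intro H3. apply H2. exists (U, i0). simpl. split; auto. split; auto.
    intros i Hi Ui. apply H3. exists i; auto. }
  pose (f := fun w => proj1_sig (constructive_indefinite_description _ (H w))).
  assert (Hf : forall w, open tX (fst (f w)) /\ fst (f w) w /\
             forall i, dle D (snd (f w)) i -> ~ fst (f w) (s i)).
  { intros w. exact (proj2_sig (constructive_indefinite_description _ (H w))). }
  destruct (Hc X (fun w => fst (f w))) as [l Hl].
  - intros w. apply Hf.
  - intros w. exists w. apply Hf.
  - destruct (upper_list D (fun w => snd (f w)) l) as [k Hk].
    destruct (Hl (s k)) as [w [Hw Fw]].
    apply (proj2 (proj2 (Hf w)) k); auto.
Qed.

Definition nbT {X} (tX : topology X) (D : directed) (z : X) : Type :=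
  {p : D * (X -> Prop) | open tX (snd p) /\ snd p z}.

Definition nbLe {X} (tX : topology X) (D : directed) (z : X) (a b : nbT tX D z) : Prop :=
  dle D (fst (proj1_sig a)) (fst (proj1_sig b)) /\
  forall w, snd (proj1_sig b) w -> snd (proj1_sig a) w.

Lemma nbLe_refl {X} (tX : topology X) D z : forall a, nbLe tX D z a a.
Proof. intros a. split; [apply dle_refl | auto]. Qed.

Lemma nbLe_trans {X} (tX : topology X) D z : forall a b c,
  nbLe tX D z a b -> nbLe tX D z b c -> nbLe tX D z a c.
Proof. intros a b c [H1 H2] [H3 H4]. split; [eapply dle_trans; eauto | auto]. Qed.

Lemma nbLe_upper {X} (tX : topology X) D z : forall a b,
  exists c, nbLe tX D z a c /\ nbLe tX D z b c.
Proof.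
  intros [[i U] [HU Uz]] [[j V] [HV Vz]].
  destruct (dle_upper D i j) as [k [Hik Hjk]].
  exists (exist _ (k, fun w => U w /\ V w) (conj (open_inter X tX U V HU HV) (conj Uz Vz))).
  unfold nbLe; simpl. split; split; auto; intros w [? ?]; auto.
Qed.

Definition nbInhab {X} (tX : topology X) (D : directed) (z : X) : nbT tX D z :=
  exist _ (dinhab D, fun _ => True) (conj (open_full X tX) I).

Definition nbD {X} (tX : topology X) (D : directed) (z : X) : directed :=
  Directed (nbT tX D z) (nbLe tX D z) (nbLe_refl tX D z) (nbLe_trans tX D z)
    (nbLe_upper tX D z) (nbInhab tX D z).

Lemma subnet {X} (tX : topology X) (D : directed) (s : D -> X) (z : X) :
  (forall U, open tX U -> U z -> forall i0, exists i, dle D i0 i /\ U (s i)) ->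
  exists (D' : directed) (h : D' -> D), net_converges tX (fun j => s (h j)) z /\
    forall i0, exists j0, forall j, dle D' j0 j -> dle D i0 (h j).
Proof.
  intros Hcl.
  assert (H : forall j : nbT tX D z, exists i, dle D (fst (proj1_sig j)) i /\ snd (proj1_sig j) (s i)).
  { intros [[i U] [HU Uz]]. simpl. apply Hcl; auto. }
  pose (h := fun j => proj1_sig (constructive_indefinite_description _ (H j))).
  assert (Hh : forall j, dle D (fst (proj1_sig j)) (h j) /\ snd (proj1_sig j) (s (h j))).
  { intros j. exact (proj2_sig (constructive_indefinite_description _ (H j))). }
  exists (nbD tX D z), h. split.
  - intros U HU Uz. exists (exist _ (dinhab D, U) (conj HU Uz) : nbT tX D z).
    intros j [_ Hj]. apply Hj. apply Hh.
  - intros i0. exists (exist _ (i0, fun _ => True) (conj (open_full X tX) I) : nbT tX D z).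
    intros j [Hj _]. simpl in Hj. eapply dle_trans; [exact Hj | apply Hh].
Qed.

Lemma conv_comp {X} (tX : topology X) (D D' : directed) (s : D -> X) (h : D' -> D) z :
  net_converges tX s z -> (forall i0, exists j0, forall j, dle D' j0 j -> dle D i0 (h j)) ->
  net_converges tX (fun j => s (h j)) z.
Proof.
  intros Hs Hh U HU Uz. destruct (Hs U HU Uz) as [i0 Hi0].
  destruct (Hh i0) as [j0 Hj0]. exists j0. intros j Hj. apply Hi0, Hj0, Hj.
Qed.

Lemma le_refl' : forall i : nat, (i <= i)%nat. Proof. intros; lia. Qed.
Lemma le_trans' : forall i j k : nat, (i <= j)%nat -> (j <= k)%nat -> (i <= k)%nat.
Proof. intros; lia. Qed.
Lemma le_upper' : forall i j : nat, exists k, (i <= k)%nat /\ (j <= k)%nat.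
Proof. intros i j. exists (i + j)%nat. lia. Qed.

Definition natD : directed := Directed nat le le_refl' le_trans' le_upper' 0%nat.

Definition iter_seq {A : Type} (g : nat -> A -> A) (a0 : A) : nat -> A :=
  fix F n := match n with 0%nat => a0 | S m => g m (F m) end.

Lemma core {G X} (tX : topology X) (tG : topology G) mul inv e act :
  compact tX -> hausdorff tX -> is_topological_group tG mul inv e ->
  is_continuous_action tG tX mul e act -> minimal tX act ->
  forall x y, proximal tX act x y ->
  forall Wn : nat -> X -> Prop, (forall n, open tX (Wn n)) -> (forall n, Wn n y) ->
  exists (D : directed) (h : D -> nat) (t : D -> G) (z : X),
    net_converges tX (fun j => act (t j) x) z /\
    (forall j, Wn (h j) (act (inv (t j)) z)) /\
    (forall N, exists j0, forall j, dle D j0 j -> (N <= h j)%nat).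
Proof.
  intros Hc Hh Hg Ha Hm x y Hp Wn HWn Wny.
  destruct Hg as [_ [_ [_ [Hinv _]]]].
  destruct Ha as [Hae [Ham Hac]].
  assert (Hdelta : forall Q, open tX Q -> (exists a, Q a) ->
            exists t, Q (act t x) /\ Q (act t y)).
  { intros Q HQ [a Qa]. destruct Hp as [D [t [z [Hx Hy]]]].
    destruct (Hm z a Q HQ Qa) as [b [Qb [s Hs]]]. subst b.
    assert (HQ' := act_open tG tX act Hac s Q HQ).
    destruct (Hx _ HQ' Qb) as [i1 Hi1]. destruct (Hy _ HQ' Qb) as [i2 Hi2].
    destruct (dle_upper D i1 i2) as [k [H1 H2]].
    exists (mul s (t k)). rewrite !Ham. split; [apply Hi1 | apply Hi2]; auto. }
  assert (Hii : forall t w, act (inv t) (act t w) = w).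
  { intros t w. rewrite <- Ham, Hinv, Hae. reflexivity. }
  assert (step_ex : forall (n : nat) (Q : X -> Prop), exists p : G * (X -> Prop),
     (open tX Q /\ exists a, Q a) ->
     (open tX (snd p) /\ snd p (act (fst p) y) /\ Q (act (fst p) x) /\
      forall w, closure tX (snd p) w -> Q w /\ Wn n (act (inv (fst p)) w))).
  { intros n Q. destruct (classic (open tX Q /\ exists a, Q a)) as [Hpre|Hpre].
    - destruct Hpre as [HQ HQne]. destruct (Hdelta Q HQ HQne) as [t [Qtx Qty]].
      pose (A := fun w => Q w /\ Wn n (act (inv t) w)).
      assert (HA : open tX A).
      { apply open_inter; [exact HQ | apply (act_open tG tX act Hac); apply HWn]. }
      destruct (regular tX Hc Hh A (act t y) HA) as [B [HB [Bty HBA]]].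
      { split; [exact Qty | rewrite Hii; apply Wny]. }
      exists (t, B). intros _. simpl. auto.
    - exists (e, Q). intros H; contradiction. }
  pose (f := fun n Q => proj1_sig (constructive_indefinite_description _ (step_ex n Q))).
  assert (Hf : forall n Q, (open tX Q /\ exists a, Q a) ->
     (open tX (snd (f n Q)) /\ snd (f n Q) (act (fst (f n Q)) y) /\ Q (act (fst (f n Q)) x) /\
      forall w, closure tX (snd (f n Q)) w -> Q w /\ Wn n (act (inv (fst (f n Q))) w))).
  { intros n Q. exact (proj2_sig (constructive_indefinite_description _ (step_ex n Q))). }
  pose (Os := iter_seq (fun n Q => snd (f n Q)) (fun _ => True)).
  pose (ts := fun n => fst (f n (Os n))).
  assert (HOsS : forall n, Os (S n) = snd (f n (Os n))) by reflexivity.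
  assert (Hinvar : forall n, open tX (Os n) /\ exists a, Os n a).
  { induction n as [|n IH].
    - split; [apply open_full | exists y; exact I].
    - rewrite HOsS. destruct (Hf n (Os n) IH) as [H1 [H2 _]]. split; eauto. }
  assert (Hkey1 : forall n, Os n (act (ts n) x)).
  { intros n. destruct (Hf n (Os n) (Hinvar n)) as [_ [_ [H _]]]. exact H. }
  assert (Hkey2 : forall n w, closure tX (Os (S n)) w -> Os n w /\ Wn n (act (inv (ts n)) w)).
  { intros n w Hw. rewrite HOsS in Hw. destruct (Hf n (Os n) (Hinvar n)) as [_ [_ [_ H]]]. exact (H w Hw). }
  assert (Hmono : forall n m, (n <= m)%nat -> forall w, Os m w -> Os n w).
  { intros n m Hnm. induction Hnm as [|m Hnm IH]; auto.
    intros w Hw. apply IH. apply (Hkey2 m w). apply closure_incl; exact Hw. }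
  destruct (cluster tX Hc natD (fun n => act (ts n) x)) as [z Hz].
  assert (Hzcl : forall n, closure tX (Os n) z).
  { intros n U HU Uz. destruct (Hz U HU Uz n) as [m [Hm' Um]].
    exists (act (ts m) x). split; auto. apply (Hmono n m Hm'). apply Hkey1. }
  assert (HzW : forall n, Wn n (act (inv (ts n)) z)).
  { intros n. apply (Hkey2 n z (Hzcl (S n))). }
  destruct (subnet tX natD (fun n => act (ts n) x) z Hz) as [D' [h [Hconv Hcof]]].
  exists D', h, (fun j => ts (h j)), z. split; [exact Hconv|]. split.
  - intros j. apply HzW.
  - intros N. exact (Hcof N).
Qed.

Theorem mainTheorem8 (X G : Type) (tX : topology X) (tG : topology G)
  (mul : G -> G -> G) (inv : G -> G) (e : G) (act : G -> X -> X) :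
  compact tX -> hausdorff tX ->
  is_topological_group tG mul inv e ->
  is_continuous_action tG tX mul e act ->
  minimal tX act ->
  (forall x y, proximal tX act x y -> closure tX (veech tX inv act x) y) /\
  (metrizable tX -> forall x y, proximal tX act x y -> veech tX inv act x y).
Proof.
  intros Hc Hh Hg Ha Hm. split.
  - intros x y Hp W HW Wy.
    destruct (regular tX Hc Hh W y HW Wy) as [W1 [HW1 [W1y HW1W]]].
    destruct (core tX tG mul inv e act Hc Hh Hg Ha Hm x y Hp (fun _ => W1)
                (fun _ => HW1) (fun _ => W1y)) as [D [h [t [z [Hconv [HWt _]]]]]].
    simpl in HWt.
    destruct (cluster tX Hc D (fun j => act (inv (t j)) z)) as [y' Hy'].
    exists y'. split.
    + apply HW1W. intros U HU Uy'. destruct (Hy' U HU Uy' (dinhab D)) as [j [_ Uj]].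
      exists (act (inv (t j)) z). split; [exact Uj | apply HWt].
    + destruct (subnet tX D _ y' Hy') as [D2 [h2 [Hc2 Hcof2]]].
      exists D2, (fun k => t (h2 k)), z. split.
      * apply (conv_comp tX D D2 (fun j => act (t j) x) h2 z Hconv Hcof2).
      * exact Hc2.
  - intros [d [Hd0 [Hdeq [Hdsym [Htri Hopen]]]]] x y Hp.
    pose (Wn := fun (n : nat) w => d y w < / INR (S n)).
    assert (HWn : forall n, open tX (Wn n)).
    { intros n. apply Hopen. intros w Hw. unfold Wn in *.
      exists (/ INR (S n) - d y w). split; [lra|].
      intros v Hv. specialize (Htri y w v). lra. }
    assert (Wny : forall n, Wn n y).
    { intros n. unfold Wn. assert (d y y = 0) as E by (apply Hdeq; reflexivity).
      rewrite E. apply Rinv_0_lt_compat, lt_0_INR. lia. }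
    destruct (core tX tG mul inv e act Hc Hh Hg Ha Hm x y Hp Wn HWn Wny)
      as [D [h [t [z [Hconv [HW Hcof]]]]]].
    exists D, t, z. split; [exact Hconv|].
    intros U HU Uy. destruct (proj1 (Hopen U) HU y Uy) as [eps [Heps HUe]].
    destruct (archimed_cor1 eps Heps) as [N [HN HN0]].
    destruct (Hcof N) as [j0 Hj0]. exists j0. intros j Hj.
    apply HUe. specialize (HW j). unfold Wn in HW. specialize (Hj0 j Hj).
    assert (/ INR (S (h j)) <= / INR N).
    { apply Rinv_le_contravar; [apply lt_0_INR; lia | apply le_INR; lia]. }
    lra.
Qed.
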